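(* In the timely decision problem described in the context, define $\alpha_0=\beta_0=0\in\mathbb{R}^{\Theta}$ and, for $t\ge1$ and $\theta\in\Theta$, with $\bar p_t\doteq\sum_{\theta'\in\Theta}p_{\theta',\lambda_{t-1}}\mu_{t-1}(\theta')$, $$\alpha_t(\theta)=\alpha_{t-1}(\theta)-\mu_{t-1}(\theta)\,\nu_{t-1}\nu_t\,\frac{p_{\theta,\lambda_{t-1}}-\bar p_t}{1-\bar p_t},\qquad \beta_t(\theta)=\beta_{t-1}(\theta)+\mu_{t-1}(\theta)\,\nu_{t-1}(1-\nu_t)\,\frac{p_{\theta,\lambda_{t-1}}-\bar p_t}{\bar p_t}.$$ Then the posterior decomposes as $\mu_t=\tilde\mu_t+\alpha_t+\beta_t$, where $\tilde\mu_t\doteq\mu_t-\alpha_t-\beta_t$ is a martingale: $\mathbb{E}[\tilde\mu_t-\tilde\mu_{t-1}\mid \lambda_{t-1},\mu_{t-1},\nu_{t-1}]=0$ for all $t\ge1$. Here $\tilde\mu_t$ captures the information from the acquired outcomes, $\alpha_t$ (a function of $\mu_{t-1},\lambda_{t-1},\nu_{t-1},\nu_t$ and the past) compensates for the bias due to survival, and $\beta_t$ compensates for the bias due to stoppage.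
   Context: $\Theta,\Lambda,\Omega$ are finite nonempty sets; $\Delta(\Theta)$ is the simplex over $\Theta$. For $\theta\in\Theta,\lambda\in\Lambda$, $q_{\theta,\lambda}$ is a known distribution on $\Omega$ and $p_{\theta,\lambda}\in(0,1)$. A latent $\theta\sim\mu_0$ (known prior). Survival process $\nu_t\in\{0,1\}$, $\nu_0=1$. At each time $t$ with $\nu_t=1$ an acquisition $\lambda_t\in\Lambda$ is chosen as a (possibly randomized) function of the observed history; given $\theta,\nu_t=1,\lambda_t$, $\nu_{t+1}=0$ with probability $p_{\theta,\lambda_t}$, otherwise $\nu_{t+1}=1$ and an outcome $\omega_{t+1}\sim q_{\theta,\lambda_t}$ is observed, conditionally independent of the past given $\theta,\lambda_t$; once $\nu_t=0$ nothing more happens and $\nu$ stays $0$. $\mu_t\in\Delta(\Theta)$ is the posterior of $\theta$ given the observed history ($\lambda_{0:t-1}$, $\nu_{1:t}$, observed outcomes); it satisfies $\mu_t=\mu_{t-1}$ if $\nu_{t-1}=0$, $\mu_t(\theta)\propto p_{\theta,\lambda_{t-1}}\mu_{t-1}(\theta)$ if $\nu_{t-1}=1,\nu_t=0$, and $\mu_t(\theta)\propto(1-p_{\theta,\lambda_{t-1}})q_{\theta,\lambda_{t-1}}(\omega_t)\mu_{t-1}(\theta)$ if $\nu_t=1$. *)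

(* Defs.v *)
From HB Require Import structures.
From mathcomp Require Import all_boot all_order all_algebra.
From mathcomp Require Import reals.
Set Implicit Arguments. Unset Strict Implicit. Unset Printing Implicit Defensive.
Import Order.TTheory GRing.Theory Num.Theory.
Local Open Scope ring_scope.

(* A path is a sequence of steps x : option (L * option O):
     Some (l, Some w) : acquisition l chosen, survived, outcome w observed;
     Some (l, None)   : acquisition l chosen, stopped (nu becomes 0);
     None             : already stopped, nothing happens (padding).
   The k-th step (0-indexed) of a path is the transition from time k to k+1. *)

Section Model.
Variables (R : realType) (Th L O : finType).
Variables (p : Th -> L -> R) (q : Th -> L -> O -> R) (mu0 : Th -> R).
(* behavioural (randomized) policy: distribution over L given observed history *)
Variable pi : seq (option (L * option O)) -> L -> R.

Definition survived (x : option (L * option O)) : bool :=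
  if x is Some (_, Some _) then true else false.

Definition alive (h : seq (option (L * option O))) : bool := all survived h.
Definition nu (k : nat) (h : seq (option (L * option O))) : bool := alive (take k h).

(* lambda_k (None if no acquisition is made at time k, i.e. already stopped) *)
Definition lam (k : nat) (h : seq (option (L * option O))) : option L :=
  if nth None h k is Some (l, _) then Some l else None.

Definition emit (th : Th) (l : L) (o : option O) : R :=
  if o is Some w then (1 - p th l) * q th l w else p th l.

Definition trans (th : Th) (h : seq (option (L * option O))) (x : option (L * option O)) : R :=
  if alive h then (if x is Some (l, o) then pi h l * emit th l o else 0)
  else (if x is None then 1 else 0).

Definition joint (th : Th) (h : seq (option (L * option O))) : R :=
  mu0 th * \prod_(i < size h) trans th (take i h) (nth None h i).

Definition post (h : seq (option (L * option O))) : {ffun Th -> R} :=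
  [ffun th => joint th h / \sum_(th' : Th) joint th' h].

Definition pbar (m : {ffun Th -> R}) (l : L) : R := \sum_(th : Th) p th l * m th.

Fixpoint alpha (k : nat) (h : seq (option (L * option O))) (th : Th) : R :=
  match k with
  | 0 => 0
  | k'.+1 => alpha k' h th -
      (if lam k' h is Some l then
         let m := post (take k' h) in let pb := pbar m l in
         m th * (nu k' h)%:R * (nu k'.+1 h)%:R * ((p th l - pb) / (1 - pb))
       else 0)
  end.

Fixpoint beta (k : nat) (h : seq (option (L * option O))) (th : Th) : R :=
  match k with
  | 0 => 0
  | k'.+1 => beta k' h th +
      (if lam k' h is Some l then
         let m := post (take k' h) in let pb := pbar m l in
         m th * (nu k' h)%:R * (1 - (nu k'.+1 h)%:R) * ((p th l - pb) / pb)
       else 0)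
  end.

Definition mutilde (k : nat) (h : seq (option (L * option O))) (th : Th) : R :=
  post (take k h) th - alpha k h th - beta k h th.

End Model.

(* Main.v *)
Require Import Defs.
From HB Require Import structures.
From mathcomp Require Import all_boot all_order all_algebra.
From mathcomp Require Import reals.
From mathcomp Require Import ring lra.
Set Implicit Arguments. Unset Strict Implicit. Unset Printing Implicit Defensive.
Import Order.TTheory GRing.Theory Num.Theory.
Local Open Scope ring_scope.

Lemma big_optionE (R : realType) (T : finType) (F : option T -> R) :
  \sum_(x : option T) F x = F None + \sum_(y : T) F (Some y).
Proof.
rewrite (bigD1 None) //=; congr (_ + _).
rewrite (@reindex_omap _ _ _ _ _ Some id) /=; last by case.
by apply: eq_bigl => y; rewrite eqxx.
Qed.

Section M.
Variables (R : realType) (Th L O : finType).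
Variables (p : Th -> L -> R) (q : Th -> L -> O -> R) (mu0 : Th -> R).
Variable pi : seq (option (L * option O)) -> L -> R.
Hypothesis hp : forall th l, 0 < p th l < 1.
Hypothesis hq0 : forall th l w, 0 <= q th l w.
Hypothesis hq1 : forall th l, \sum_(w : O) q th l w = 1.
Hypothesis hmu0 : forall th, 0 <= mu0 th.
Hypothesis hpi0 : forall h l, 0 <= pi h l.

Local Notation joint := (joint p q mu0 pi).
Local Notation post := (post p q mu0 pi).
Local Notation trans := (trans p q pi).
Local Notation emit := (emit p q).

Lemma joint_rcons th g x : joint th (rcons g x) = joint th g * trans th g x.
Proof.
rewrite /joint size_rcons big_ord_recr /= mulrA; congr (_ * _ * _).
- apply: eq_bigr => i _.
  by rewrite -cats1 takel_cat ?nth_cat ?ltn_ord // ltnW.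
- by rewrite -cats1 takel_cat // take_size nth_cat ltnn subnn.
Qed.

Lemma emit_ge0 th l o : 0 <= emit th l o.
Proof.
have := hp th l => /andP[h1 h2].
case: o => [w|] /=; last exact: ltW.
by rewrite mulr_ge0 // subr_ge0 ltW.
Qed.

Lemma trans_ge0 th g x : 0 <= trans th g x.
Proof.
rewrite /trans; case: (alive g); case: x => [[l o]|] //=.
by rewrite mulr_ge0 // emit_ge0.
Qed.

Lemma joint_ge0 th g : 0 <= joint th g.
Proof. by rewrite /joint mulr_ge0 // prodr_ge0 // => i _; apply: trans_ge0. Qed.

Lemma Zpost h th : (\sum_th' joint th' h) * post h th = joint th h.
Proof.
rewrite /Defs.post ffunE.
have [Z0|Zn0] := eqVneq (\sum_th' joint th' h) 0.
  by rewrite Z0 mul0r (psumr_eq0P (fun i _ => joint_ge0 i h) Z0).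
by rewrite mulrC divfK.
Qed.



Definition lamx (x : option (L * option O)) : option L :=
  if x is Some (l, _) then Some l else None.

Definition Aterm g x th : R :=
  if lamx x is Some l then
    post g th * (alive g)%:R * (alive (rcons g x))%:R
      * ((p th l - pbar p (post g) l) / (1 - pbar p (post g) l))
  else 0.

Definition Bterm g x th : R :=
  if lamx x is Some l then
    post g th * (alive g)%:R * (1 - (alive (rcons g x))%:R)
      * ((p th l - pbar p (post g) l) / pbar p (post g) l)
  else 0.

Lemma key g l th :
  \sum_(x | lamx x == l) (\sum_th' joint th' (rcons g x))
     * (post (rcons g x) th - post g th + Aterm g x th - Bterm g x th) = 0.
Proof.
set Zg := \sum_th' joint th' g.
set m := post g.
have Hj th' : joint th' g = m th' * Zg by rewrite -(Zpost g th') mulrC.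
have [Z0|Zn0] := eqVneq Zg 0.
  apply: big1 => x _.
  rewrite big1 ?mul0r // => th' _.
  by rewrite joint_rcons Hj Z0 mulr0 mul0r.
have m0 th' : 0 <= m th'.
  by rewrite /m /Defs.post ffunE divr_ge0 ?joint_ge0 // sumr_ge0 // => i _; apply: joint_ge0.
have m1 : \sum_th' m th' = 1.
  rewrite /m /Defs.post; under eq_bigr do rewrite ffunE.
  by rewrite -mulr_suml divff.
case Ha: (alive g); last first.
  apply: big1 => -[y|] _.
    rewrite big1 ?mul0r // => th' _.
    by rewrite joint_rcons /Defs.trans Ha mulr0.
  have -> : post (rcons g None) = m.
    apply/ffunP => th'; rewrite /m /Defs.post !ffunE.
    rewrite joint_rcons /Defs.trans Ha mulr1; congr (_ / _).
    by apply: eq_bigr => i _; rewrite joint_rcons /Defs.trans Ha mulr1.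
  by rewrite /Aterm /Bterm /= subrr !addr0 subr0 mulr0.
have tN th' : trans th' g None = 0 by rewrite /Defs.trans Ha.
have tS th' l' o : trans th' g (Some (l', o)) = pi g l' * emit th' l' o.
  by rewrite /Defs.trans Ha.
case: l => [l0|]; last first.
  apply: big1 => -[[l' o]|] //= _.
  rewrite big1 ?mul0r // => th' _.
  by rewrite joint_rcons tN mulr0.
rewrite big_mkcond big_optionE /= add0r.
rewrite -big_mkcond.
rewrite (@reindex_omap _ _ _ _ _ (fun o => (l0, o)) (fun y => Some y.2)); last first.
  by case=> l1 o /= /eqP [->].
under eq_bigl do rewrite /= !eqxx.
set pb := pbar p m l0.
have possum (f : Th -> R) : (forall i, 0 < f i) -> \sum_i f i * m i != 0.
  move=> hf; apply/eqP => H.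
  have H2 := psumr_eq0P (fun i _ => mulr_ge0 (ltW (hf i)) (m0 i)) H.
  have : \sum_th' m th' = 0.
    apply: big1 => i _; have /eqP := H2 i isT.
    rewrite mulf_eq0 => /orP[/eqP f0|/eqP //].
    by have := hf i; rewrite f0 ltxx.
  by rewrite m1 => /eqP; rewrite oner_eq0.
have pbn0 : pb != 0.
  by apply: possum => i; have /andP[] := hp i l0.
have pbE : pb = \sum_th' m th' * p th' l0.
  by rewrite /pb /pbar; apply: eq_bigr => i _; rewrite mulrC.
have pb1E : 1 - pb = \sum_th' (1 - p th' l0) * m th'.
  under eq_bigr do rewrite mulrBl mul1r.
  by rewrite sumrB m1.
have pb1n0 : 1 - pb != 0.
  by rewrite pb1E; apply: possum => i; have /andP[_] := hp i l0; rewrite subr_gt0.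
have Ea o : alive (rcons g (Some (l0, o))) = (o != None).
  by move: Ha; rewrite /alive all_rcons => ->; case: o.
have ZS o : \sum_th' joint th' (rcons g (Some (l0, o)))
    = Zg * pi g l0 * \sum_th' m th' * emit th' l0 o.
  rewrite mulr_sumr; apply: eq_bigr => th' _.
  by rewrite joint_rcons tS Hj; ring.
have JS o : (\sum_th' joint th' (rcons g (Some (l0, o)))) * post (rcons g (Some (l0, o))) th
    = m th * Zg * (pi g l0 * emit th l0 o).
  by rewrite Zpost joint_rcons tS Hj.
have SE : \sum_w \sum_th' m th' * emit th' l0 (Some w) = 1 - pb.
  rewrite exchange_big /= pb1E; apply: eq_bigr => th' _ /=.
  under eq_bigr do rewrite mulrA.
  by rewrite -mulr_sumr hq1 mulr1 mulrC.
have TS w : (\sum_th' joint th' (rcons g (Some (l0, Some w)))) *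
     (post (rcons g (Some (l0, Some w))) th - m th + Aterm g (Some (l0, Some w)) th -
       Bterm g (Some (l0, Some w)) th)
   = (Zg * pi g l0 * m th * (1 - p th l0)) * q th l0 w
     + (Zg * pi g l0 * m th * ((p th l0 - pb) / (1 - pb) - 1))
        * \sum_th' m th' * emit th' l0 (Some w).
  rewrite !mulrDr JS ZS /Aterm /Bterm /= Ea Ha -/m -/pb /=; ring.
rewrite big_optionE (eq_bigr _ (fun w _ => TS w)) big_split /= -!mulr_sumr hq1 SE.
rewrite !mulrDr JS ZS /Aterm /Bterm /= Ea Ha -/m -/pb -pbE /=.
by field; rewrite pbn0 pb1n0.
Qed.

End M.
Lemma theadE n (T : Type) (t : n.+1.-tuple T) : thead t :: behead t = t.
Proof. by case: t => -[|x s] . Qed.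

Lemma big_tupleS (R : realType) (T : finType) (s : nat) (F : s.+1.-tuple T -> R) :
  \sum_(h : s.+1.-tuple T) F h =
  \sum_(g : s.-tuple T) \sum_(x : T) F [tuple of rcons g x].
Proof.
rewrite pair_big /=.
pose f := fun gx : s.-tuple T * T => [tuple of rcons gx.1 gx.2].
pose f' := fun h : s.+1.-tuple T =>
  ([tuple of belast (thead h) (behead h)], last (thead h) (behead h)).
rewrite (@reindex _ _ _ _ _ f) /=; first by [].
exists f' => [[g x] _ | h _].
- rewrite /f /f' /=.
  have E := theadE [tuple of rcons g x].
  have := lastI (thead [tuple of rcons g x]) (behead [tuple of rcons g x]).
  rewrite E => /rcons_inj [E1 E2].
  by congr (_, _); [apply: val_inj => /=; exact: (esym E1) | exact: (esym E2)].
- apply: val_inj; rewrite /f /f' /= -lastI.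
  by rewrite theadE.
Qed.

Lemma take_rcons_s (T : Type) (g : seq T) x s : size g = s -> take s (rcons g x) = g.
Proof. by move=> <-; rewrite -cats1 takel_cat // take_size. Qed.

Lemma take_rcons_S (T : Type) (g : seq T) x s : size g = s -> take s.+1 (rcons g x) = rcons g x.
Proof. by move=> <-; rewrite take_oversize // size_rcons. Qed.

Theorem proposition2 (R : realType) (Th L O : finType)
  (p : Th -> L -> R) (q : Th -> L -> O -> R) (mu0 : Th -> R)
  (pi : seq (option (L * option O)) -> L -> R)
  (hp : forall th l, 0 < p th l < 1)
  (hq0 : forall th l w, 0 <= q th l w)
  (hq1 : forall th l, \sum_(w : O) q th l w = 1)
  (hmu0 : forall th, 0 <= mu0 th)
  (hmu1 : \sum_(th : Th) mu0 th = 1)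
  (hpi0 : forall h l, 0 <= pi h l)
  (hpi1 : forall h, \sum_(l : L) pi h l = 1) :
  (forall (t : nat) (h : seq (option (L * option O))) (th : Th),
     post p q mu0 pi (take t h) th
     = mutilde p q mu0 pi t h th + alpha p q mu0 pi t h th + beta p q mu0 pi t h th) /\
  (forall (t : nat), (0 < t)%N ->
   forall (l : option L) (m : {ffun Th -> R}) (n : bool) (th : Th),
     \sum_(th' : Th)
       \sum_(h : t.-tuple (option (L * option O)) |
               (lam t.-1 h == l) && (post p q mu0 pi (take t.-1 h) == m)
               && (nu t.-1 h == n))
         joint p q mu0 pi th' h
           * (mutilde p q mu0 pi t h th - mutilde p q mu0 pi t.-1 h th) = 0).
Proof.
split.
  by move=> t h th; rewrite /mutilde; ring.
move=> t t0 l m n th; case: t t0 => [//|s] _ /=.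
rewrite exchange_big /=.
under eq_bigr => h _ do rewrite -mulr_suml.
rewrite big_mkcond big_tupleS /=.
apply: big1 => g _.
have Hs : size g = s := size_tuple g.
have lamE x : lam s (rcons g x) = lamx x.
  by rewrite /lam nth_rcons Hs ltnn eqxx.
have nuE x : nu s (rcons g x) = alive g by rewrite /nu take_rcons_s.
have nuSE x : nu s.+1 (rcons g x) = alive (rcons g x) by rewrite /nu take_rcons_S.
have [c|c] := boolP ((post p q mu0 pi g == m) && (alive g == n)).
  apply: (etrans _ (key hp hq0 hq1 hmu0 hpi0 g l th)); rewrite [RHS]big_mkcond.
  apply: eq_bigr => x _ /=.
  rewrite lamE nuE take_rcons_s // -andbA c andbT.
  case: ifP => // _.
  rewrite /mutilde /= take_rcons_S // take_rcons_s // lamE nuE nuSE.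
  rewrite /Aterm /Bterm; congr (_ * _); case: (lamx x) => [l0|]; ring.
apply: big1 => x _ /=.
by rewrite lamE nuE take_rcons_s // -andbA (negbTE c) andbF.
Qed.
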